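(* Assume (A1)–(A4), let $b$ be consistent, $\delta>0$, $\tau>1$, $\|b^\delta-b\|\le\delta$, and let $k_\delta$ be the first index $k\ge1$ with $\rho_1^2\|Ax_k^\delta-b^\delta\|^2+\rho_2^2\|Wx_k^\delta-y_k^\delta\|^2\le\max(\rho_1^2,\rho_2^2)\tau^2\delta^2$. Then there exist constants $c,C>0$ depending only on $\rho_2,\tau,c_0$ such that for every integer $1\le m<k_\delta-1$ and every feasible point $(\hat x,\hat y)$, $$D_{\mu_{k_\delta}^\delta}f(\hat y,y_{k_\delta}^\delta)+cE_{k_\delta}^\delta\le D_{\mu_m^\delta}f(\hat y,y_m^\delta)+\max\{\rho_1,\rho_2\}\tau\delta^2+C\|W(\hat x-x_m^\delta)\|^2+CE_m^\delta+C\|s_m^\delta\|^2+C\big|\langle y_{m-1}^\delta-y_m^\delta,W(\hat x-x_{m+1}^\delta)\rangle\big|$$ and $$\big|\langle\mu_{k_\delta}^\delta,y_{k_\delta}^\delta-\hat y\rangle\big|\le\big|\langle\mu_m^\delta,y_{k_\delta}^\delta-\hat y\rangle\big|+\max\{\rho_1,\rho_2\}\tau\delta^2+C\sum_{k=m}^{k_\delta}E_k^\delta+C\|W(x_{k_\delta}^\delta-\hat x)\|^2.$$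
   Context: $\mathcal X,\mathcal Y,\mathcal H$ are real Hilbert spaces. Standing assumptions: (A1) $A:\mathcal X\to\mathcal H$ is bounded linear. (A2) $f:\mathcal Y\to(-\infty,\infty]$ is proper, lower semicontinuous and strongly convex with constant $c_0>0$: $f(ty_1+(1-t)y_2)+c_0t(1-t)\|y_1-y_2\|^2\le tf(y_1)+(1-t)f(y_2)$ for all $y_1,y_2$, $t\in[0,1]$. (A3) $W:\mathscr D(W)\subset\mathcal X\to\mathcal Y$ is a densely defined closed linear operator. (A4) There is $c_1>0$ with $\|Ax\|^2+\|Wx\|^2\ge c_1\|x\|^2$ for all $x\in\mathscr D(W)$. $\mathscr D(f)=\{y:f(y)<\infty\}$; $b$ is consistent if $b=Ax$ for some $x\in\mathscr D(W)$ with $Wx\in\mathscr D(f)$. A feasible point is a pair $(\hat x,\hat y)$ with $\hat x\in\mathscr D(W)$, $\hat y\in\mathscr D(f)$, $A\hat x=b$, $W\hat x=\hat y$. Noisy ADMM: fix $\rho_1,\rho_2>0$ and initial $y_0^\delta\in\mathcal Y$, $\lambda_0^\delta\in\mathcal H$, $\mu_0^\delta\in\mathcal Y$. For $k=0,1,\dots$: $x_{k+1}^\delta=\arg\min_{x\in\mathscr D(W)}\{\langle\lambda_k^\delta,Ax\rangle+\langle\mu_k^\delta,Wx\rangle+\frac{\rho_1}{2}\|Ax-b^\delta\|^2+\frac{\rho_2}{2}\|Wx-y_k^\delta\|^2\}$, $y_{k+1}^\delta=\arg\min_{y\in\mathcal Y}\{f(y)-\langle\mu_k^\delta,y\rangle+\frac{\rho_2}{2}\|Wx_{k+1}^\delta-y\|^2\}$,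 $\lambda_{k+1}^\delta=\lambda_k^\delta+\rho_1(Ax_{k+1}^\delta-b^\delta)$, $\mu_{k+1}^\delta=\mu_k^\delta+\rho_2(Wx_{k+1}^\delta-y_{k+1}^\delta)$. (These minimizers exist and are unique; $\mu_k^\delta\in\partial f(y_k^\delta)$ for $k\ge1$.) Notation: $r_k^\delta=Ax_k^\delta-b^\delta$, $s_k^\delta=Wx_k^\delta-y_k^\delta$, $E_k^\delta=\rho_1\|r_k^\delta\|^2+\rho_2\|s_k^\delta\|^2+\rho_2\|y_k^\delta-y_{k-1}^\delta\|^2$ for $k\ge1$. Bregman distance: for $y$ with $\mu\in\partial f(y)$, $D_\mu f(\bar y,y)=f(\bar y)-f(y)-\langle\mu,\bar y-y\rangle$. *)

(* Defs.v *)
From Stdlib Require Import Reals.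
Open Scope R_scope.

Record Hilbert : Type := mkHilbert {
  hcar :> Type;
  hadd : hcar -> hcar -> hcar;
  hopp : hcar -> hcar;
  hzero : hcar;
  hscal : R -> hcar -> hcar;
  hinner : hcar -> hcar -> R;
  hadd_assoc : forall x y z, hadd x (hadd y z) = hadd (hadd x y) z;
  hadd_comm : forall x y, hadd x y = hadd y x;
  hadd_0 : forall x, hadd x hzero = x;
  hadd_opp : forall x, hadd x (hopp x) = hzero;
  hscal_assoc : forall a b x, hscal a (hscal b x) = hscal (a * b) x;
  hscal_1 : forall x, hscal 1 x = x;
  hscal_distr_l : forall a x y, hscal a (hadd x y) = hadd (hscal a x) (hscal a y);
  hscal_distr_r : forall a b x, hscal (a + b) x = hadd (hscal a x) (hscal b x);
  hinner_sym : forall x y, hinner x y = hinner y x;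
  hinner_add_l : forall x y z, hinner (hadd x y) z = hinner x z + hinner y z;
  hinner_scal_l : forall a x y, hinner (hscal a x) y = a * hinner x y;
  hinner_pos : forall x, 0 <= hinner x x;
  hinner_def : forall x, hinner x x = 0 -> x = hzero;
  hcomplete : forall u : nat -> hcar,
    (forall eps, 0 < eps -> exists N, forall n m, (N <= n)%nat -> (N <= m)%nat ->
        sqrt (hinner (hadd (u n) (hopp (u m))) (hadd (u n) (hopp (u m)))) < eps) ->
    exists l, forall eps, 0 < eps -> exists N, forall n, (N <= n)%nat ->
        sqrt (hinner (hadd (u n) (hopp l)) (hadd (u n) (hopp l))) < eps
}.

Arguments hadd {h} _ _.
Arguments hopp {h} _.
Arguments hzero {h}.
Arguments hscal {h} _ _.
Arguments hinner {h} _ _.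

Definition hsub {H : Hilbert} (x y : H) : H := hadd x (hopp y).
Definition hnorm {H : Hilbert} (x : H) : R := sqrt (hinner x x).

Definition converges {H : Hilbert} (u : nat -> H) (l : H) : Prop :=
  forall eps, 0 < eps -> exists N, forall n, (N <= n)%nat -> hnorm (hsub (u n) l) < eps.

Definition bounded_linear {X H : Hilbert} (A : X -> H) : Prop :=
  (forall x y, A (hadd x y) = hadd (A x) (A y)) /\
  (forall a x, A (hscal a x) = hscal a (A x)) /\
  (exists M, forall x, hnorm (A x) <= M * hnorm x).

(* (A3) densely defined closed linear operator W with domain DW
   (W is a total function; its values outside DW are irrelevant). *)
Definition densely_defined_closed {X Y : Hilbert} (DW : X -> Prop) (W : X -> Y) : Prop :=
  DW hzero /\
  (forall x z, DW x -> DW z -> DW (hadd x z)) /\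
  (forall a x, DW x -> DW (hscal a x)) /\
  (forall x z, DW x -> DW z -> W (hadd x z) = hadd (W x) (W z)) /\
  (forall a x, DW x -> W (hscal a x) = hscal a (W x)) /\
  (forall x eps, 0 < eps -> exists z, DW z /\ hnorm (hsub x z) < eps) /\
  (forall (u : nat -> X) x v, (forall n, DW (u n)) -> converges u x ->
     converges (fun n => W (u n)) v -> DW x /\ W x = v).

(* Extended reals (-oo excluded): values of f : Y -> (-oo, +oo]. *)
Inductive ereal : Type := Fin (r : R) | PInf.

Definition ele (a b : ereal) : Prop :=
  match a, b with
  | _, PInf => True
  | PInf, Fin _ => False
  | Fin x, Fin y => x <= y
  end.

Definition eplus (a : ereal) (r : R) : ereal :=
  match a with Fin x => Fin (x + r) | PInf => PInf end.

Definition fval (a : ereal) : R := match a with Fin x => x | PInf => 0 end.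

Definition in_dom {Y : Hilbert} (f : Y -> ereal) (y : Y) : Prop := f y <> PInf.

Definition proper {Y : Hilbert} (f : Y -> ereal) : Prop := exists y, in_dom f y.

Definition lsc {Y : Hilbert} (f : Y -> ereal) : Prop :=
  forall (u : nat -> Y) y r, converges u y ->
    (forall n, ele (f (u n)) (Fin r)) -> ele (f y) (Fin r).

(* (A2) strong convexity with constant c0 (inequality is trivial if
   f y1 or f y2 is +oo, with the convention 0 * oo = 0). *)
Definition strongly_convex {Y : Hilbert} (f : Y -> ereal) (c0 : R) : Prop :=
  forall (y1 y2 : Y) (t a b : R), 0 <= t <= 1 -> f y1 = Fin a -> f y2 = Fin b ->
    exists v, f (hadd (hscal t y1) (hscal (1 - t) y2)) = Fin v /\
      v + c0 * t * (1 - t) * (hnorm (hsub y1 y2)) ^ 2 <= t * a + (1 - t) * b.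

Definition coercive_pair {X H Y : Hilbert} (A : X -> H) (DW : X -> Prop) (W : X -> Y) : Prop :=
  exists c1, 0 < c1 /\ forall x, DW x -> (hnorm (A x)) ^ 2 + (hnorm (W x)) ^ 2 >= c1 * (hnorm x) ^ 2.

Definition consistent {X H Y : Hilbert} (A : X -> H) (DW : X -> Prop) (W : X -> Y)
  (f : Y -> ereal) (b : H) : Prop :=
  exists x, DW x /\ in_dom f (W x) /\ A x = b.

Definition feasible {X H Y : Hilbert} (A : X -> H) (DW : X -> Prop) (W : X -> Y)
  (f : Y -> ereal) (b : H) (xh : X) (yh : Y) : Prop :=
  DW xh /\ in_dom f yh /\ A xh = b /\ W xh = yh.

(* Noisy ADMM: the sequences x, y, lam, mu satisfy the iteration for all k
   (x 0 is unused; y 0, lam 0, mu 0 are the arbitrary initial values). *)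
Definition admm {X H Y : Hilbert} (A : X -> H) (DW : X -> Prop) (W : X -> Y)
  (f : Y -> ereal) (rho1 rho2 : R) (bd : H)
  (x : nat -> X) (y : nat -> Y) (lam : nat -> H) (mu : nat -> Y) : Prop :=
  forall k : nat,
    (DW (x (S k)) /\
      forall z, DW z ->
        hinner (lam k) (A (x (S k))) + hinner (mu k) (W (x (S k)))
        + rho1 / 2 * (hnorm (hsub (A (x (S k))) bd)) ^ 2
        + rho2 / 2 * (hnorm (hsub (W (x (S k))) (y k))) ^ 2
        <= hinner (lam k) (A z) + hinner (mu k) (W z)
        + rho1 / 2 * (hnorm (hsub (A z) bd)) ^ 2
        + rho2 / 2 * (hnorm (hsub (W z) (y k))) ^ 2) /\
    (forall z,
       ele (eplus (f (y (S k))) (- hinner (mu k) (y (S k))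
                                 + rho2 / 2 * (hnorm (hsub (W (x (S k))) (y (S k)))) ^ 2))
           (eplus (f z) (- hinner (mu k) z + rho2 / 2 * (hnorm (hsub (W (x (S k))) z)) ^ 2))) /\
    lam (S k) = hadd (lam k) (hscal rho1 (hsub (A (x (S k))) bd)) /\
    mu (S k) = hadd (mu k) (hscal rho2 (hsub (W (x (S k))) (y (S k)))).

(* E_k for k >= 1 *)
Definition Ek {X H Y : Hilbert} (A : X -> H) (W : X -> Y) (rho1 rho2 : R) (bd : H)
  (x : nat -> X) (y : nat -> Y) (k : nat) : R :=
  rho1 * (hnorm (hsub (A (x k)) bd)) ^ 2 + rho2 * (hnorm (hsub (W (x k)) (y k))) ^ 2
  + rho2 * (hnorm (hsub (y k) (y (k - 1)%nat))) ^ 2.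

Definition bregman {Y : Hilbert} (f : Y -> ereal) (mu : Y) (yb y : Y) : R :=
  fval (f yb) - fval (f y) - hinner mu (hsub yb y).

Definition stop_cond {X H Y : Hilbert} (A : X -> H) (W : X -> Y) (rho1 rho2 tau delta : R)
  (bd : H) (x : nat -> X) (y : nat -> Y) (k : nat) : Prop :=
  rho1 ^ 2 * (hnorm (hsub (A (x k)) bd)) ^ 2 + rho2 ^ 2 * (hnorm (hsub (W (x k)) (y k))) ^ 2
  <= Rmax (rho1 ^ 2) (rho2 ^ 2) * tau ^ 2 * delta ^ 2.

(* Main.v *)
Require Import Defs.
From Stdlib Require Import Reals Lra Lia.
Open Scope R_scope.

Lemma ip_zl {H : Hilbert} (y : H) : hinner hzero y = 0.
Proof.
  pose proof (hinner_add_l H hzero hzero y) as E.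
  rewrite hadd_0 in E. lra.
Qed.

Lemma ip_oppl {H : Hilbert} (x y : H) : hinner (hopp x) y = - hinner x y.
Proof.
  pose proof (hinner_add_l H x (hopp x) y) as E.
  rewrite hadd_opp, ip_zl in E. lra.
Qed.

Lemma ip_addr {H : Hilbert} (x y z : H) : hinner z (hadd x y) = hinner z x + hinner z y.
Proof. rewrite !(hinner_sym H z). apply hinner_add_l. Qed.
Lemma ip_oppr {H : Hilbert} (x y : H) : hinner y (hopp x) = - hinner y x.
Proof. rewrite !(hinner_sym H y). apply ip_oppl. Qed.
Lemma ip_scalr {H : Hilbert} a (x y : H) : hinner y (hscal a x) = a * hinner y x.
Proof. rewrite !(hinner_sym H y). apply hinner_scal_l. Qed.
Lemma ip_subl {H : Hilbert} (x y z : H) : hinner (hsub x y) z = hinner x z - hinner y z.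
Proof. unfold hsub. rewrite hinner_add_l, ip_oppl. lra. Qed.
Lemma ip_subr {H : Hilbert} (x y z : H) : hinner z (hsub x y) = hinner z x - hinner z y.
Proof. unfold hsub. rewrite ip_addr, ip_oppr. lra. Qed.

Lemma ip_addl {H : Hilbert} (x y z : H) : hinner (hadd x y) z = hinner x z + hinner y z.
Proof. apply hinner_add_l. Qed.
Lemma ip_scall {H : Hilbert} a (x y : H) : hinner (hscal a x) y = a * hinner x y.
Proof. apply hinner_scal_l. Qed.

Ltac ipx := repeat (rewrite ?ip_subl, ?ip_subr, ?ip_addl, ?ip_addr, ?ip_scall, ?ip_scalr, ?ip_oppl, ?ip_oppr).
Ltac ipxin H := repeat (rewrite ?ip_subl, ?ip_subr, ?ip_addl, ?ip_addr, ?ip_scall, ?ip_scalr, ?ip_oppl, ?ip_oppr in H).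

Lemma nsq {H : Hilbert} (x : H) : (hnorm x) ^ 2 = hinner x x.
Proof. unfold hnorm. rewrite pow2_sqrt; [reflexivity| apply hinner_pos]. Qed.

Lemma hadd_cancel {H : Hilbert} (a b c : H) : hadd a c = hadd b c -> a = b.
Proof.
  intro E. assert (E2 : hadd (hadd a c) (hopp c) = hadd (hadd b c) (hopp c)) by (rewrite E; reflexivity).
  rewrite <- !hadd_assoc, hadd_opp, !hadd_0 in E2. exact E2.
Qed.

Lemma hscal0 {H : Hilbert} (x : H) : hscal 0 x = hzero.
Proof.
  apply (hadd_cancel _ _ (hscal 0 x)).
  rewrite <- hscal_distr_r, Rplus_0_r, hadd_comm, hadd_0. reflexivity.
Qed.

Lemma hopp_scal {H : Hilbert} (x : H) : hopp x = hscal (-1) x.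
Proof.
  apply (hadd_cancel _ _ x). rewrite (hadd_comm H (hopp x)), hadd_opp.
  rewrite <- (hscal_1 H x) at 2. rewrite <- hscal_distr_r.
  replace (-1 + 1) with 0 by lra. rewrite hscal0. reflexivity.
Qed.

Lemma young {H : Hilbert} (a b : H) t : 0 < t ->
  2 * Rabs (hinner a b) <= t * hinner a a + / t * hinner b b.
Proof.
  intro Ht.
  pose proof (hinner_pos H (hadd (hscal t a) (hscal (-1) b))) as P1.
  pose proof (hinner_pos H (hadd (hscal t a) b)) as P2.
  ipxin P1; ipxin P2; rewrite (hinner_sym H b a) in P1, P2.
  assert (0 < / t) by (apply Rinv_0_lt_compat; lra).
  assert (E1 : t * hinner a a + / t * hinner b b = / t * (t*t*hinner a a + hinner b b)) by (field; lra).
  assert (E2 : hinner a b = / t * (t * hinner a b)) by (field; lra).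
  rewrite E1, E2, Rabs_mult, (Rabs_right (/t)) by lra.
  assert (Rabs (t * hinner a b) * 2 <= t * t * hinner a a + hinner b b).
  { unfold Rabs; destruct Rcase_abs; nra. }
  nra.
Qed.

Ltac add_sym :=
  repeat match goal with
  | H : context [@hinner ?h ?a ?b] |- _ =>
      lazymatch goal with
      | _ : @hinner h a b = @hinner h b a |- _ => fail
      | _ : @hinner h b a = @hinner h a b |- _ => fail
      | _ => assert (@hinner h a b = @hinner h b a) by apply hinner_sym
      end
  | |- context [@hinner ?h ?a ?b] =>
      lazymatch goal with
      | _ : @hinner h a b = @hinner h b a |- _ => fail
      | _ : @hinner h b a = @hinner h a b |- _ => fail
      | _ => assert (@hinner h a b = @hinner h b a) by apply hinner_sym
      end
  end.

Ltac canon_goal := repeat match goal with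
 | |- context [@hinner ?h ?a ?b] => tryif constr_eq a b then fail else
     (match goal with |- context [@hinner h b a] => rewrite (hinner_sym h a b) end)
 end.
Ltac revert_ips := repeat match goal with H : context[@hinner _ _ _] |- _ => revert H end.
Ltac ipsolve := revert_ips; canon_goal; intros; lra.

Lemma lin_sub {X Y : Hilbert} (DW : X -> Prop) (W : X -> Y) :
  densely_defined_closed DW W -> forall a b, DW a -> DW b ->
  W (hsub a b) = hsub (W a) (W b) /\ DW (hsub a b).
Proof.
  intros (H0 & Hadd & Hsc & Wadd & Wsc & _) a b Ha Hb.
  unfold hsub. rewrite !hopp_scal.
  split. rewrite Wadd, Wsc; auto. apply Hadd; auto.
Qed.

Lemma linA_sub {X Y : Hilbert} (A : X -> Y) :
  bounded_linear A -> forall a b, A (hsub a b) = hsub (A a) (A b).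
Proof.
  intros (Hadd & Hsc & _) a b. unfold hsub. rewrite !hopp_scal, Hadd, Hsc. reflexivity.
Qed.

Lemma quad0 (L Q : R) : 0 <= Q -> (forall t, 0 <= t * L + t ^ 2 * Q) -> L = 0.
Proof.
  intros HQ Ht.
  specialize (Ht (- L / (Q + 1))).
  assert (E : - L / (Q + 1) * L + (- L / (Q + 1)) ^ 2 * Q = - (L * L) / ((Q+1)*(Q+1))).
  { field. lra. }
  rewrite E in Ht.
  assert (0 < (Q+1)*(Q+1)) by nra.
  assert (0 <= - (L*L)) .
  { apply (Rmult_le_compat_r ((Q+1)*(Q+1))) in Ht; [|lra].
    unfold Rdiv in Ht. rewrite Rmult_0_l, Rmult_assoc, Rinv_l in Ht; lra. }
  nra.
Qed.

Lemma lin0 (X Y : R) : 0 <= Y -> (forall t, 0 < t <= 1 -> 0 <= t * X + t ^ 2 * Y) -> 0 <= X.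
Proof.
  intros HY Ht. destruct (Rle_or_lt 0 X) as [|HX]; [lra|].
  set (t := Rmin 1 (- X / (2 * (Y + 1)))).
  assert (Hp : 0 < - X / (2 * (Y + 1))) by (apply Rdiv_lt_0_compat; lra).
  assert (Ht1 : 0 < t <= 1) by (unfold t; split; [apply Rmin_glb_lt; lra | apply Rmin_l]).
  assert (Ht2 : t <= - X / (2 * (Y + 1))) by apply Rmin_r.
  specialize (Ht t Ht1).
  assert (0 <= X + t * Y).
  { assert (0 <= t * (X + t * Y)) by (replace (t * (X + t*Y)) with (t * X + t^2 * Y) by ring; lra).
    destruct (Rle_or_lt 0 (X + t*Y)); [lra|]. nra. }
  assert (t * Y <= - X / (2 * (Y + 1)) * Y) by (apply Rmult_le_compat_r; lra).
  assert (- X / (2 * (Y + 1)) * Y <= - X / 2).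
  { unfold Rdiv. rewrite Rinv_mult. 
    assert (0 < / (Y+1)) by (apply Rinv_0_lt_compat; lra).
    assert (/ (Y+1) * Y <= 1).
    { apply (Rmult_le_reg_l (Y+1)); [lra|]. rewrite <- Rmult_assoc, Rinv_r; lra. }
    assert (0 < / 2) by lra. nra. }
  lra.
Qed.

Lemma foc {X H Y : Hilbert} (A : X -> H) DW (W : X -> Y) f rho1 rho2 bd x y lam mu :
  bounded_linear A -> densely_defined_closed DW W ->
  admm A DW W f rho1 rho2 bd x y lam mu -> 0 <= rho1 -> 0 <= rho2 ->
  forall k z, DW z ->
  hinner (lam k) (A z) + hinner (mu k) (W z)
  + rho1 * hinner (hsub (A (x (S k))) bd) (A z)
  + rho2 * hinner (hsub (W (x (S k))) (y k)) (W z) = 0.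
Proof.
  intros HA HW Hadm Hr1 Hr2 k z Hz.
  destruct (Hadm k) as [[Hx Hmin] _].
  pose proof HA as (Aadd & Asc & _).
  pose proof HW as (H0 & Dadd & Dsc & Wadd & Wsc & _).
  apply (quad0 _ (rho1 / 2 * hinner (A z) (A z) + rho2 / 2 * hinner (W z) (W z))).
  { pose proof (hinner_pos _ (A z)). pose proof (hinner_pos _ (W z)). nra. }
  intro t.
  specialize (Hmin (hadd (x (S k)) (hscal t z)) (Dadd _ _ Hx (Dsc _ _ Hz))).
  rewrite Aadd, Asc, Wadd, Wsc in Hmin by auto.
  rewrite !nsq in Hmin. unfold hsub in *. ipxin Hmin. ipx. ipsolve.
Qed.

Lemma subgrad {X H Y : Hilbert} (A : X -> H) DW (W : X -> Y) f rho1 rho2 bd x y lam mu c0 :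
  admm A DW W f rho1 rho2 bd x y lam mu -> proper f -> strongly_convex f c0 ->
  0 <= rho2 -> 0 <= c0 ->
  forall k, f (y (S k)) = Fin (fval (f (y (S k)))) /\
  forall z b, f z = Fin b ->
    fval (f (y (S k))) + hinner (mu (S k)) (hsub z (y (S k)))
    + c0 * hinner (hsub z (y (S k))) (hsub z (y (S k))) <= b.
Proof.
  intros Hadm [z0 Hz0] Hsc Hr2 Hc0 k.
  destruct (Hadm k) as [_ [Hy [_ Hmu]]].
  unfold in_dom in Hz0. destruct (f z0) as [b0|] eqn:E0; [|contradiction].
  pose proof (Hy z0) as Hy0. rewrite E0 in Hy0.
  destruct (f (y (S k))) as [a|] eqn:E1; [|simpl in Hy0; contradiction].
  split; [reflexivity|]. simpl.
  intros z b Hzb. rewrite Hmu.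
  assert (HN := hinner_pos _ (hsub z (y (S k)))).
  match goal with |- ?l <= ?r => enough (0 <= r - l) by lra end.
  apply (lin0 _ ((c0 + rho2/2) * hinner (hsub z (y (S k))) (hsub z (y (S k))))).
  { nra. }
  intros t Ht.
  destruct (Hsc z (y (S k)) t b a ltac:(lra) Hzb E1) as [v [Ev Hv]].
  specialize (Hy (hadd (hscal t z) (hscal (1 - t) (y (S k))))).
  rewrite Ev in Hy. cbn [ele eplus] in Hy.
  repeat rewrite nsq in Hy. repeat rewrite nsq in Hv. clear Hy0. unfold hsub in *. ipxin Hy. ipxin Hv. ipx. ipsolve.
Qed.

Lemma noise1 (rho1 rho2 M tau delta rr ss ee ip : R) : 0 < rho1 -> 0 < rho2 -> rho1 <= M -> rho2 <= M ->
  1 < tau -> 0 <= rr -> 0 <= ss -> 0 <= ee -> ee <= delta ^ 2 ->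
  2 * Rabs ip <= / tau * rr + / / tau * ee ->
  M ^ 2 * tau ^ 2 * delta ^ 2 < rho1 ^ 2 * rr + rho2 ^ 2 * ss ->
  Rabs (rho1 * ip) <= (rho1 * rr + rho2 * ss) / tau.
Proof.
  intros Hr1 Hr2 HM1 HM2 Ht1 Hrr Hss Hee Hed Hy Hn. rewrite Rinv_inv in Hy.
  set (G := rho1 * rr + rho2 * ss).
  assert (HG : rho1 ^ 2 * rr + rho2 ^ 2 * ss <= M * G).
  { assert (0 <= (M - rho1) * (rho1 * rr)) by (apply Rmult_le_pos; nra).
    assert (0 <= (M - rho2) * (rho2 * ss)) by (apply Rmult_le_pos; nra).
    unfold G. nra. }
  assert (HM : 0 < M) by lra.
  assert (Hb : M * tau ^ 2 * delta ^ 2 <= G).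
  { apply (Rmult_le_reg_l M); [lra|]. nra. }
  rewrite Rabs_mult, (Rabs_right rho1) by lra.
  assert (Ht : tau * (2 * Rabs ip) <= rr + tau ^ 2 * ee).
  { replace (rr + tau^2 * ee) with (tau * (/ tau * rr + tau * ee)) by (field; lra).
    apply Rmult_le_compat_l; lra. }
  assert (tau * (rho1 * Rabs ip) <= G).
  { assert (rho1 * (tau * (2 * Rabs ip)) <= rho1 * (rr + tau ^ 2 * ee)) by (apply Rmult_le_compat_l; lra).
    assert (rho1 * (tau^2 * ee) <= M * tau ^ 2 * delta ^ 2).
    { assert (0 <= tau^2) by nra. assert (tau^2 * ee <= tau^2 * delta^2) by (apply Rmult_le_compat_l; lra).
      assert (0 <= tau^2 * ee) by nra. nra. }
    unfold G in *. assert (0 <= rho2 * ss) by nra. nra. }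
  apply (Rmult_le_reg_l tau); [lra|]. unfold Rdiv. replace (tau * (G * / tau)) with G by (field; lra). lra.
Qed.

Lemma noise2 (rho1 rho2 M tau delta rr ss ee ip : R) : 0 < rho1 -> 0 < rho2 -> rho1 <= M ->
  1 < tau -> 0 <= rr -> 0 <= ss -> 0 <= ee -> ee <= delta ^ 2 ->
  2 * Rabs ip <= 2 / tau * rr + / (2 / tau) * ee ->
  Rabs (rho1 * ip) <= (rho1 * rr + rho2 * ss) / tau + M * tau * delta ^ 2.
Proof.
  intros Hr1 Hr2 HM1 Ht1 Hrr Hss Hee Hed Hy. replace (/ (2 / tau)) with (tau / 2) in Hy by (field; lra).
  rewrite Rabs_mult, (Rabs_right rho1) by lra.
  assert (rho1 * (2 * Rabs ip) <= rho1 * (2 / tau * rr + tau / 2 * ee)) by (apply Rmult_le_compat_l; lra).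
  assert (rho1 * (tau * ee) <= M * tau * delta ^ 2).
  { assert (tau * ee <= tau * delta ^ 2) by (apply Rmult_le_compat_l; lra).
    assert (0 <= tau * ee) by nra. nra. }
  assert (0 <= rho2 * ss / tau) by (apply Rmult_le_pos; [nra| left; apply Rinv_0_lt_compat; lra]).
  assert (E1 : rho1 * (2 / tau * rr + tau / 2 * ee) = 2 * (rho1 * rr / tau) + rho1 * (tau * ee) / 2) by (field; lra).
  assert (E2 : (rho1 * rr + rho2 * ss) / tau = rho1 * rr / tau + rho2 * ss / tau) by (field; lra).
  assert (0 <= M * tau * delta ^ 2) by (apply Rmult_le_pos; [nra| apply pow2_ge_0]).
  rewrite E2. lra.
Qed.

Lemma sq_add {H : Hilbert} (a b : H) : hinner (hadd a b) (hadd a b) <= 2 * hinner a a + 2 * hinner b b.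
Proof. pose proof (hinner_pos H (hsub a b)) as P. unfold hsub in P. ipxin P. ipx. ipsolve. Qed.

Lemma sq_sub {H : Hilbert} (a b : H) : hinner (hsub a b) (hsub a b) <= 2 * hinner a a + 2 * hinner b b.
Proof. pose proof (hinner_pos H (hadd a b)) as P. unfold hsub. ipxin P. ipx. ipsolve. Qed.

Fixpoint psum (g : nat -> R) (a L : nat) : R :=
  match L with 0 => 0 | S L' => psum g a L' + g (a + L')%nat end.

Lemma psum_le g h a L : (forall k, (a <= k < a + L)%nat -> g k <= h k) -> psum g a L <= psum h a L.
Proof. induction L; intro Hk; simpl. lra. assert (g (a+L)%nat <= h (a+L)%nat) by (apply Hk; lia).
  assert (psum g a L <= psum h a L) by (apply IHL; intros; apply Hk; lia). lra. Qed.

Lemma psum_plus g h a L : psum (fun k => g k + h k) a L = psum g a L + psum h a L.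
Proof. induction L; simpl; lra. Qed.
Lemma psum_scal c g a L : psum (fun k => c * g k) a L = c * psum g a L.
Proof. induction L; simpl; [ring|]. rewrite IHL. ring. Qed.
Lemma psum_const c a L : psum (fun _ => c) a L = INR L * c.
Proof. induction L; simpl psum. simpl; ring. rewrite IHL, S_INR. ring. Qed.
Lemma psum_shift g a L : psum g a (S L) = g a + psum g (S a) L.
Proof. induction L. simpl. rewrite Nat.add_0_r. ring.
  change (psum g a (S (S L))) with (psum g a (S L) + g (a + S L)%nat).
  rewrite IHL. simpl. replace (a + S L)%nat with (S (a + L)) by lia. ring. Qed.
Lemma psum_comp g a L : psum (fun k => g (S k)) a L = psum g (S a) L.
Proof. induction L; simpl; [reflexivity|]. rewrite IHL. reflexivity. Qed.
Lemma psum_nonneg g a L : (forall k, (a <= k < a + L)%nat -> 0 <= g k) -> 0 <= psum g a L.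
Proof. intro H. replace 0 with (psum (fun _ => 0) a L). apply psum_le; auto.
  rewrite psum_const. ring. Qed.

Lemma telesc (u g : nat -> R) a L :
  (forall k, (a <= k < a + L)%nat -> u (S k) <= u k + g k) -> u (a + L)%nat <= u a + psum g a L.
Proof. induction L; intro Hk; simpl. rewrite Nat.add_0_r. lra.
  replace (a + S L)%nat with (S (a + L)) by lia.
  assert (u (S (a+L)) <= u (a+L)%nat + g (a+L)%nat) by (apply Hk; lia).
  assert (u (a + L)%nat <= u a + psum g a L) by (apply IHL; intros; apply Hk; lia). lra. Qed.

Lemma tel_abs (u : nat -> R) a L :
  Rabs (u (a + L)%nat - u a) <= psum (fun k => Rabs (u (S k) - u k)) a L.
Proof. induction L; simpl. rewrite Nat.add_0_r. replace (u a - u a) with 0 by ring. rewrite Rabs_R0; lra.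
  replace (a + S L)%nat with (S (a + L)) by lia.
  replace (u (S (a + L)) - u a) with ((u (S (a+L)) - u (a+L)%nat) + (u (a+L)%nat - u a)) by ring.
  eapply Rle_trans; [apply Rabs_triang|]. lra. Qed.

Lemma mono (u : nat -> R) a L :
  (forall k, (a <= k < a + L)%nat -> u (S k) <= u k) -> forall j, (a <= j <= a + L)%nat -> u (a + L)%nat <= u j.
Proof. induction L; intros Hk j Hj. replace j with (a + 0)%nat by lia. lra.
  replace (a + S L)%nat with (S (a + L)) by lia.
  destruct (Nat.eq_dec j (S (a + L))) as [->|]. lra.
  assert (u (S (a+L)) <= u (a+L)%nat) by (apply Hk; lia).
  assert (u (a + L)%nat <= u j) by (apply IHL; [intros; apply Hk; lia| lia]). lra. Qed.

Lemma sumf_psum g m N : sum_f_R0 (fun i => g (m + i)%nat) N = psum g m (S N).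
Proof. induction N; simpl. lra. rewrite IHN. simpl. reflexivity. Qed.

Lemma telesc2 (u g : nat -> R) a L :
  (forall k, (a <= k < a + L)%nat -> u (S k) + g k <= u k) -> u (a + L)%nat + psum g a L <= u a.
Proof. induction L; intro Hk; simpl. rewrite Nat.add_0_r. lra.
  replace (a + S L)%nat with (S (a + L)) by lia.
  assert (u (S (a+L)) + g (a+L)%nat <= u (a+L)%nat) by (apply Hk; lia).
  assert (u (a + L)%nat + psum g a L <= u a) by (apply IHL; intros; apply Hk; lia). lra. Qed.

Lemma psum_ext g h a L : (forall k, g k = h k) -> psum g a L = psum h a L.
Proof. intro E. induction L; simpl; [reflexivity|]. rewrite IHL, E. reflexivity. Qed.

Lemma abs4 a b c d : Rabs (a + b + c + d) <= Rabs a + Rabs b + Rabs c + Rabs d.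
Proof. eapply Rle_trans; [apply Rabs_triang|]. eapply Rle_trans; [apply Rplus_le_compat_r, Rabs_triang|].
  eapply Rle_trans; [apply Rplus_le_compat_r, Rplus_le_compat_r, Rabs_triang|]. lra. Qed.

Theorem lemma2p12 :
  forall rho2 tau c0 : R, 0 < rho2 -> 1 < tau -> 0 < c0 ->
  exists c C : R, 0 < c /\ 0 < C /\
  forall (X Y H : Hilbert) (A : X -> H) (DW : X -> Prop) (W : X -> Y) (f : Y -> ereal)
         (b bd : H) (delta rho1 : R)
         (x : nat -> X) (y : nat -> Y) (lam : nat -> H) (mu : nat -> Y) (kd : nat),
    bounded_linear A ->
    proper f -> lsc f -> strongly_convex f c0 ->
    densely_defined_closed DW W ->
    coercive_pair A DW W ->
    consistent A DW W f b ->
    0 < rho1 ->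
    0 < delta -> hnorm (hsub bd b) <= delta ->
    admm A DW W f rho1 rho2 bd x y lam mu ->
    (1 <= kd)%nat ->
    stop_cond A W rho1 rho2 tau delta bd x y kd ->
    (forall k, (1 <= k)%nat -> (k < kd)%nat -> ~ stop_cond A W rho1 rho2 tau delta bd x y k) ->
    forall m : nat, (1 <= m)%nat -> (m + 1 < kd)%nat ->
    forall (xh : X) (yh : Y), feasible A DW W f b xh yh ->
      bregman f (mu kd) yh (y kd) + c * Ek A W rho1 rho2 bd x y kd
      <= bregman f (mu m) yh (y m) + Rmax rho1 rho2 * tau * delta ^ 2
         + C * (hnorm (W (hsub xh (x m)))) ^ 2
         + C * Ek A W rho1 rho2 bd x y m
         + C * (hnorm (hsub (W (x m)) (y m))) ^ 2
         + C * Rabs (hinner (hsub (y (m - 1)%nat) (y m)) (W (hsub xh (x (m + 1)%nat))))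
    /\
      Rabs (hinner (mu kd) (hsub (y kd) yh))
      <= Rabs (hinner (mu m) (hsub (y kd) yh)) + Rmax rho1 rho2 * tau * delta ^ 2
         + C * sum_f_R0 (fun i => Ek A W rho1 rho2 bd x y (m + i)) (kd - m)
         + C * (hnorm (W (hsub (x kd) xh))) ^ 2.
Proof.
  intros rho2 tau c0 Hr2 Htau Hc0.
  set (th := 1 - / tau).
  assert (Hth : 0 < th) by (unfold th; assert (/ tau < / 1) by (apply Rinv_lt_contravar; lra); rewrite Rinv_1 in *; lra).
  set (al := th * c0 / (2 * (c0 + rho2 * th))).
  assert (Hal : 0 < al) by (unfold al; apply Rdiv_lt_0_compat; nra).
  assert (Hal1 : al <= th / 2).
  { unfold al. apply (Rmult_le_reg_r (2 * (c0 + rho2 * th))); [nra|].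
    unfold Rdiv. rewrite Rmult_assoc, Rinv_l by nra. nra. }
  assert (Hal2 : al * rho2 <= c0 / 2).
  { unfold al. apply (Rmult_le_reg_r (2 * (c0 + rho2 * th))); [nra|].
    unfold Rdiv. replace (th * c0 * / (2 * (c0 + rho2 * th)) * rho2 * (2 * (c0 + rho2 * th)))
     with (th * c0 * rho2 * (/ (2 * (c0 + rho2 * th)) * (2 * (c0 + rho2 * th)))) by ring.
    rewrite Rinv_l by nra. nra. }
  set (K1 := 1/2 + 3 * rho2 / (8 * c0)).
  set (K2 := / rho2 + / (4 * c0)).
  assert (HK1 : 0 < K1) by (unfold K1; assert (0 < 3 * rho2 / (8*c0)) by (apply Rdiv_lt_0_compat; lra); lra).
  assert (HK2 : 0 < K2) by (unfold K2; assert (0 < / rho2) by (apply Rinv_0_lt_compat; lra);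
    assert (0 < / (4*c0)) by (apply Rinv_0_lt_compat; lra); lra).
  set (C1 := 3 * K1 + 3/2 + (3 * rho2 * K2 + 11) / al).
  assert (HC1 : 0 < C1) by (unfold C1; assert (0 < (3 * rho2 * K2 + 11) / al) by (apply Rdiv_lt_0_compat; nra); lra).
  exists al, (C1 + rho2 + 3).
  split; [exact Hal|]. split; [lra|].
  intros X Y H A DW W f b bd delta rho1 x y lam mu kd HA Hprop Hlsc Hsc HW Hcoer Hcons Hr1 Hdel Hbd
    Hadm Hkd Hstop Hnstop m Hm Hmk xh yh Hfeas.
  destruct Hfeas as (Hxh & Hyh & HAxh & HWxh).
  pose proof (foc A DW W f rho1 rho2 bd x y lam mu HA HW Hadm ltac:(lra) ltac:(lra)) as FOC.
  pose proof (subgrad A DW W f rho1 rho2 bd x y lam mu c0 Hadm Hprop Hsc ltac:(lra) ltac:(lra)) as SG.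
  clear Hlsc Hcoer Hcons Hprop.
  pose (r := fun k => hsub (A (x k)) bd).
  pose (s := fun k => hsub (W (x k)) (y k)).
  pose (d := fun k => hsub (y k) (y (k - 1)%nat)).
  pose (p := fun k => hsub (W (x k)) (y (k - 1)%nat)).
  pose (w := fun k => hsub (W (x k)) yh).
  pose (e := hsub bd b).
  assert (SGk : forall k, (1 <= k)%nat -> f (y k) = Fin (fval (f (y k))) /\
     forall z bb, f z = Fin bb -> fval (f (y k)) + hinner (mu k) (hsub z (y k))
       + c0 * hinner (hsub z (y k)) (hsub z (y k)) <= bb).
  { intros k Hk. destruct k as [|k]; [lia|]. apply SG. }
  assert (FA : forall k, (2 <= k)%nat -> 2 * c0 * hinner (d k) (d k) <= rho2 * hinner (s k) (d k)).
  { intros k Hk. destruct k as [|[|j]]; try lia.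
    destruct (SGk (S (S j)) ltac:(lia)) as [E1 S1]. destruct (SGk (S j) ltac:(lia)) as [E2 S2].
    specialize (S1 _ _ E2). specialize (S2 _ _ E1).
    destruct (Hadm (S j)) as [_ [_ [_ Hmu]]].
    rewrite Hmu in S1. unfold d, s. replace (S (S j) - 1)%nat with (S j) by lia.
    clear - S1 S2. unfold hsub in *. ipxin S1. ipxin S2. ipx. ipsolve. }
  assert (FB : forall k z, (1 <= k)%nat -> DW z -> rho1 * hinner (r (S k)) (A z)
     + rho2 * hinner (p (S k)) (W z) - rho2 * hinner (d k) (W z) = 0).
  { intros k z Hk Hz. destruct k as [|j]; [lia|].
    pose proof (FOC (S j) z Hz) as F1. pose proof (FOC j z Hz) as F2.
    destruct (Hadm j) as [_ [_ [Hlam Hmu]]]. rewrite Hlam, Hmu in F1.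
    unfold r, p, d. replace (S (S j) - 1)%nat with (S j) by lia. replace (S j - 1)%nat with j by lia.
    clear - F1 F2. unfold hsub in *. ipxin F1. ipxin F2. ipx. ipsolve. }
  assert (FC : forall k, (1 <= k)%nat ->
     bregman f (mu (S k)) yh (y (S k)) + rho2 * hinner (d (S k)) (w (S k))
     <= bregman f (mu k) yh (y k) - c0 * hinner (d (S k)) (d (S k))
        - (rho1 * hinner (r (S k)) (r (S k)) + rho2 * hinner (s (S k)) (s (S k)))
        - rho1 * hinner (r (S k)) e + rho2 * hinner (d k) (w (S k))).
  { intros k Hk.
    destruct (SGk k Hk) as [Ek1 Sk]. destruct (SGk (S k) ltac:(lia)) as [Ek2 _].
    specialize (Sk _ _ Ek2).
    destruct (lin_sub DW W HW (x (S k)) xh (proj1 (proj1 (Hadm k))) Hxh) as [WE DE].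
    pose proof (FB k _ Hk DE) as B1. rewrite WE, (linA_sub A HA), HAxh, HWxh in B1.
    destruct (Hadm k) as [_ [_ [_ Hmu]]].
    unfold bregman. rewrite Hmu.
    unfold r, s, d, p, w, e in *. replace (S k - 1)%nat with k in * by lia.
    clear - Sk B1. unfold hsub in *. ipxin Sk. ipxin B1. ipx. ipsolve. }
  assert (Dx : forall k, (1 <= k)%nat -> DW (x k)).
  { intros k Hk. destruct k as [|k]; [lia|]. exact (proj1 (proj1 (Hadm k))). }
  pose (Et := fun k => rho1 * hinner (r k) (r k) + rho2 * hinner (p k) (p k)).
  pose (Pq := fun k => hinner (hsub (p (S k)) (p k)) (hsub (p (S k)) (p k))).
  pose (dd := fun k => hinner (d k) (d k)).
  pose (ss := fun k => hinner (s k) (s k)).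
  pose (G := fun k => rho1 * hinner (r k) (r k) + rho2 * ss k).
  pose (E := fun k => G k + rho2 * dd k).
  assert (FD : forall k, (1 <= k)%nat -> Et (S k) + rho2 * Pq k + 2 * rho2 * hinner (d k) (s k) <= Et k).
  { intros k Hk.
    destruct (lin_sub DW W HW (x (S k)) (x k) (Dx (S k) ltac:(lia)) (Dx k Hk)) as [WE DE].
    pose proof (FB k _ Hk DE) as B1. rewrite WE, (linA_sub A HA) in B1.
    assert (P1 : 0 <= rho1 * hinner (hsub (r (S k)) (r k)) (hsub (r (S k)) (r k)))
      by (apply Rmult_le_pos; [lra| apply hinner_pos]).
    unfold Et, Pq, r, s, d, p in *. replace (S k - 1)%nat with k in * by lia.
    clear - B1 P1. unfold hsub in *. ipxin B1. ipxin P1. ipx. ipsolve. }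
  assert (FD2 : forall k, (2 <= k)%nat -> Et (S k) + rho2 * Pq k + 4 * c0 * dd k <= Et k).
  { intros k Hk. pose proof (FD k ltac:(lia)). pose proof (FA k Hk).
    unfold dd. rewrite (hinner_sym _ (d k) (s k)) in *. lra. }
  assert (FD1 : forall k, (1 <= k)%nat -> Et (S k) <= Et k + rho2 * (dd k + ss k)).
  { intros k Hk. pose proof (FD k Hk). pose proof (young (d k) (s k) 1 ltac:(lra)) as Y1.
    rewrite Rinv_1 in Y1.
    assert (- hinner (d k) (s k) <= (dd k + ss k) / 2).
    { pose proof (Rle_abs (- hinner (d k) (s k))). rewrite Rabs_Ropp in *. unfold dd, ss. lra. }
    assert (0 <= Pq k) by apply hinner_pos.
    assert (rho2 * (- hinner (d k) (s k)) <= rho2 * ((dd k + ss k) / 2)) by (apply Rmult_le_compat_l; lra).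
    assert (0 <= rho2 * Pq k) by (apply Rmult_le_pos; lra).
    lra. }
  assert (FE : forall k, Et k <= 2 * E k).
  { intros k.
    assert (hinner (p k) (p k) <= 2 * ss k + 2 * dd k).
    { pose proof (hinner_pos _ (hsub (s k) (d k))) as P1.
      unfold ss, dd, s, d, p in *. clear - P1. unfold hsub in *. ipxin P1. ipx. ipsolve. }
    assert (rho2 * hinner (p k) (p k) <= rho2 * (2 * ss k + 2 * dd k)) by (apply Rmult_le_compat_l; lra).
    assert (0 <= rho1 * hinner (r k) (r k)) by (apply Rmult_le_pos; [lra|apply hinner_pos]).
    unfold Et, E, G. lra. }
  assert (FF : forall k, (2 <= k)%nat -> E k <= Et k /\ ss k + dd k <= hinner (p k) (p k)).
  { intros k Hk. pose proof (FA k Hk).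
    assert (0 <= dd k) by apply hinner_pos.
    assert (SD : 0 <= hinner (s k) (d k)) by (unfold dd in *; nra).
    assert (ss k + dd k <= hinner (p k) (p k)).
    { unfold ss, dd, s, d, p in *. clear - SD. unfold hsub in *. ipxin SD. ipx. ipsolve. }
    assert (rho2 * (ss k + dd k) <= rho2 * hinner (p k) (p k)) by (apply Rmult_le_compat_l; lra).
    unfold E, Et, G. split; lra. }
  assert (FG : forall k, rho2 * (hinner (d k) (w (S k)) - hinner (d k) (w k)) <= rho2 * (3/2 * dd k + Pq k / 2)).
  { intros k. pose proof (young (d k) (hsub (p (S k)) (p k)) 1 ltac:(lra)) as Y1. rewrite Rinv_1 in Y1.
    assert (hinner (d k) (w (S k)) - hinner (d k) (w k) = dd k + hinner (d k) (hsub (p (S k)) (p k))).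
    { unfold dd, w, d, p. replace (S k - 1)%nat with k by lia. clear. unfold hsub. ipx. ipsolve. }
    pose proof (Rle_abs (hinner (d k) (hsub (p (S k)) (p k)))).
    apply Rmult_le_compat_l; [lra|]. unfold dd, Pq in *. lra. }
  set (M := Rmax rho1 rho2).
  assert (HM1 : rho1 <= M) by apply Rmax_l.
  assert (HM2 : rho2 <= M) by apply Rmax_r.
  assert (HRM : Rmax (rho1 ^ 2) (rho2 ^ 2) = M ^ 2).
  { unfold M, Rmax. destruct (Rle_dec rho1 rho2); destruct (Rle_dec (rho1^2) (rho2^2)); try reflexivity.
    - exfalso. nra.
    - assert (rho1 = rho2) by nra. subst. reflexivity. }
  assert (Hee : hinner e e <= delta ^ 2).
  { rewrite <- nsq. assert (0 <= hnorm e) by apply sqrt_pos. apply pow_incr. split; [lra| exact Hbd]. }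
  assert (Hep : 0 <= hinner e e) by apply hinner_pos.
  assert (FH1 : forall k, (1 <= k)%nat -> (k < kd)%nat -> Rabs (rho1 * hinner (r k) e) <= G k / tau).
  { intros k Hk1 Hk2. pose proof (Hnstop k Hk1 Hk2) as NS. unfold stop_cond in NS.
    apply Rnot_le_lt in NS. rewrite !nsq, HRM in NS.
    apply (noise1 rho1 rho2 M tau delta _ _ (hinner e e)); try lra; try apply hinner_pos.
    apply young. apply Rinv_0_lt_compat; lra. exact NS. }
  assert (FH2 : forall k, Rabs (rho1 * hinner (r k) e) <= G k / tau + M * tau * delta ^ 2).
  { intros k. apply (noise2 rho1 rho2 M tau delta _ _ (hinner e e)); try lra; try apply hinner_pos.
    apply young. apply Rdiv_lt_0_compat; lra. }
  assert (FI : forall k, 2 * Rabs (hinner (d kd) (w (S k)) - hinner (d kd) (w k))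
     <= al * dd kd + (2 / al) * (Pq k + dd k)).
  { intros k.
    assert (Eq : hinner (d kd) (w (S k)) - hinner (d kd) (w k) = hinner (d kd) (hadd (hsub (p (S k)) (p k)) (d k))).
    { unfold w, d, p. replace (S k - 1)%nat with k by lia. clear. unfold hsub. ipx. ipsolve. }
    rewrite Eq. pose proof (young (d kd) (hadd (hsub (p (S k)) (p k)) (d k)) al Hal) as Y1.
    pose proof (sq_add (hsub (p (S k)) (p k)) (d k)) as S1.
    assert (0 < / al) by (apply Rinv_0_lt_compat; lra).
    assert (/ al * hinner (hadd (hsub (p (S k)) (p k)) (d k)) (hadd (hsub (p (S k)) (p k)) (d k))
        <= / al * (2 * Pq k + 2 * dd k)) by (apply Rmult_le_compat_l; [lra| exact S1]).
    unfold Rdiv. unfold dd in *. lra. }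
  assert (FI0 : 2 * Rabs (hinner (d kd) (w m)) <= dd kd + hinner (w m) (w m)).
  { pose proof (young (d kd) (w m) 1 ltac:(lra)) as Y1. rewrite Rinv_1 in Y1. unfold dd. lra. }
  set (vv := hsub (y kd) yh).
  assert (FQ : forall k, (1 <= k)%nat ->
     hinner (mu (S k)) vv + rho2 * hinner (d (S k)) (w kd) - (hinner (mu k) vv + rho2 * hinner (d k) (w kd))
     = - rho1 * hinner (r (S k)) (r kd) - rho1 * hinner (r (S k)) e - rho2 * hinner (s (S k)) (s kd)).
  { intros k Hk.
    destruct (lin_sub DW W HW (x kd) xh (Dx kd ltac:(lia)) Hxh) as [WE DE].
    pose proof (FB k _ Hk DE) as B1. rewrite WE, (linA_sub A HA), HAxh, HWxh in B1.
    destruct (Hadm k) as [_ [_ [_ Hmu]]]. rewrite Hmu.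
    unfold vv, r, s, d, p, w, e in *. replace (S k - 1)%nat with k in * by lia.
    clear - B1. unfold hsub in *. ipxin B1. ipx. ipsolve. }
  assert (HGp : forall k, 0 <= G k).
  { intros k. unfold G, ss. pose proof (hinner_pos _ (r k)). pose proof (hinner_pos _ (s k)). nra. }
  assert (Hddp : forall k, 0 <= dd k) by (intros; apply hinner_pos).
  assert (HEp : forall k, 0 <= E k) by (intros; unfold E; pose proof (HGp k); pose proof (Hddp k); nra).
  assert (HPqp : forall k, 0 <= Pq k) by (intros; apply hinner_pos).
  assert (FQb : forall k, Rabs (- rho1 * hinner (r (S k)) (r kd) - rho1 * hinner (r (S k)) e - rho2 * hinner (s (S k)) (s kd))
     <= (G (S k) + G kd) / 2 + Rabs (rho1 * hinner (r (S k)) e)).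
  { intros k. pose proof (young (r (S k)) (r kd) 1 ltac:(lra)) as Y1.
    pose proof (young (s (S k)) (s kd) 1 ltac:(lra)) as Y2. rewrite Rinv_1 in Y1, Y2.
    assert (rho1 * (2 * Rabs (hinner (r (S k)) (r kd))) <= rho1 * (1 * hinner (r (S k)) (r (S k)) + 1 * hinner (r kd) (r kd)))
      by (apply Rmult_le_compat_l; lra).
    assert (rho2 * (2 * Rabs (hinner (s (S k)) (s kd))) <= rho2 * (1 * hinner (s (S k)) (s (S k)) + 1 * hinner (s kd) (s kd)))
      by (apply Rmult_le_compat_l; lra).
    eapply Rle_trans; [apply Rabs_triang|]. 
    eapply Rle_trans; [apply Rplus_le_compat_r, Rabs_triang|]. rewrite !Rabs_Ropp.
    replace (- rho1 * hinner (r (S k)) (r kd)) with (- (rho1 * hinner (r (S k)) (r kd))) by ring.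
    rewrite Rabs_Ropp, !Rabs_mult, (Rabs_right rho1), (Rabs_right rho2) by lra.
    unfold G, ss. lra. }
  assert (FU : forall k, rho2 * Rabs (hinner (d k) (w kd)) <= E k / 2 + rho2 / 2 * hinner (w kd) (w kd)).
  { intros k. pose proof (young (d k) (w kd) 1 ltac:(lra)) as Y1. rewrite Rinv_1 in Y1.
    assert (rho2 * (2 * Rabs (hinner (d k) (w kd))) <= rho2 * (1 * dd k + 1 * hinner (w kd) (w kd)))
      by (apply Rmult_le_compat_l; [lra| exact Y1]).
    pose proof (HGp k). unfold E. lra. }
  assert (TE : forall k, Ek A W rho1 rho2 bd x y k = E k).
  { intros k. unfold Ek, E, G, ss, dd, r, s, d. rewrite !nsq. reflexivity. }
  assert (TW1 : (hnorm (W (hsub xh (x m)))) ^ 2 = hinner (w m) (w m)).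
  { destruct (lin_sub DW W HW xh (x m) Hxh (Dx m Hm)) as [WE _]. rewrite nsq, WE, HWxh.
    unfold w. clear. unfold hsub. ipx. ipsolve. }
  assert (TW2 : (hnorm (W (hsub (x kd) xh))) ^ 2 = hinner (w kd) (w kd)).
  { destruct (lin_sub DW W HW (x kd) xh (Dx kd ltac:(lia)) Hxh) as [WE _]. rewrite nsq, WE, HWxh. reflexivity. }
  assert (TY : hinner (hsub (y (m - 1)%nat) (y m)) (W (hsub xh (x (m + 1)%nat))) = hinner (d m) (w (S m))).
  { replace (m + 1)%nat with (S m) by lia.
    destruct (lin_sub DW W HW xh (x (S m)) Hxh (Dx (S m) ltac:(lia))) as [WE _]. rewrite WE, HWxh.
    unfold d, w. clear. unfold hsub. ipx. ipsolve. }
  rewrite !TE, TW1, TW2, TY.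
  destruct (Nat.le_exists_sub (S (S m)) kd ltac:(lia)) as [L' [HnL _]].
  assert (Hn : kd = (S m + S L')%nat) by lia. clear HnL.
  assert (Hth_eq : forall k, G k / tau = G k - th * G k) by (intros; unfold th; field; lra).
  assert (FH1' : forall k, (1 <= k)%nat -> (k < kd)%nat -> - rho1 * hinner (r k) e <= G k - th * G k).
  { intros k Hk1 Hk2. rewrite <- Hth_eq. pose proof (FH1 k Hk1 Hk2).
    pose proof (Rle_abs (- (rho1 * hinner (r k) e))). rewrite Rabs_Ropp in *. lra. }
  pose (Dl := fun j => bregman f (mu j) yh (y j)).
  pose (T := fun j => Dl j + rho2 * hinner (d j) (w j)).
  pose (gn := fun j => - c0 * dd j - th * G j).
  pose (h := fun k => rho2 * (3/2 * dd k + Pq k / 2)).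
  pose (gE := fun k => rho2 * Pq k + 4 * c0 * dd k).
  pose (a := fun j => hinner (d kd) (w j)).
  assert (P1 : T (S m) <= Dl m + gn (S m) + rho2 * hinner (d m) (w (S m))).
  { pose proof (FC m Hm). pose proof (FH1' (S m) ltac:(lia) ltac:(lia)). unfold T, Dl, gn, G, ss, dd in *. lra. }
  assert (P2 : T (S m + L')%nat <= T (S m) + psum (fun k => gn (S k) + h k) (S m) L').
  { apply telesc. intros k Hk. pose proof (FC k ltac:(lia)). pose proof (FG k).
    pose proof (FH1' (S k) ltac:(lia) ltac:(lia)). unfold T, Dl, gn, h, G, ss, dd in *. lra. }
  assert (P3 : T kd <= T (S m + L')%nat + gn kd + M * tau * delta ^ 2 + h (S m + L')%nat).
  { replace kd with (S (S m + L')) by lia. pose proof (FC (S m + L')%nat ltac:(lia)).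
    pose proof (FG (S m + L')%nat). pose proof (FH2 (S (S m + L'))).
    pose proof (Hth_eq (S (S m + L'))).
    pose proof (Rle_abs (- (rho1 * hinner (r (S (S m + L'))) e))). rewrite Rabs_Ropp in *.
    unfold T, Dl, gn, h, G, ss, dd in *. lra. }
  assert (P4 : Et kd + psum gE (S m) (S L') <= Et (S m)).
  { rewrite Hn. apply telesc2. intros k Hk. pose proof (FD2 k ltac:(lia)). unfold gE. lra. }
  assert (HgEp : 0 <= psum gE (S m) (S L')).
  { apply psum_nonneg. intros k _. unfold gE. pose proof (HPqp k). pose proof (Hddp k). nra. }
  assert (P5 : psum h (S m) (S L') <= K1 * psum gE (S m) (S L')).
  { rewrite <- psum_scal. apply psum_le. intros k _. unfold h, gE, K1.
    pose proof (HPqp k). pose proof (Hddp k).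
    assert (E1 : (1 / 2 + 3 * rho2 / (8 * c0)) * (rho2 * Pq k + 4 * c0 * dd k)
      = rho2 * (3/2 * dd k + Pq k / 2) + 3 * rho2 / (8 * c0) * (rho2 * Pq k) + 2 * c0 * dd k) by (field; lra).
    rewrite E1. assert (0 <= 3 * rho2 / (8 * c0) * (rho2 * Pq k)).
    { apply Rmult_le_pos; [apply Rlt_le, Rdiv_lt_0_compat; lra| nra]. } nra. }
  assert (P6 : psum (fun k => Pq k + dd k) (S m) (S L') <= K2 * psum gE (S m) (S L')).
  { rewrite <- psum_scal. apply psum_le. intros k _. unfold gE, K2.
    pose proof (HPqp k). pose proof (Hddp k).
    assert (E1 : (/ rho2 + / (4 * c0)) * (rho2 * Pq k + 4 * c0 * dd k)
      = Pq k + dd k + (4 * c0 / rho2) * dd k + (rho2 / (4 * c0)) * Pq k) by (field; lra).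
    rewrite E1.
    assert (0 <= 4 * c0 / rho2 * dd k) by (apply Rmult_le_pos; [apply Rlt_le, Rdiv_lt_0_compat; lra| lra]).
    assert (0 <= rho2 / (4 * c0) * Pq k) by (apply Rmult_le_pos; [apply Rlt_le, Rdiv_lt_0_compat; lra| lra]).
    lra. }
  assert (P7 : Rabs (a kd - a m) <= INR (S (S L')) * (al / 2 * dd kd)
     + / al * (Pq m + dd m + psum (fun k => Pq k + dd k) (S m) (S L'))).
  { replace kd with (m + S (S L'))%nat at 1 by lia.
    eapply Rle_trans; [apply tel_abs|].
    eapply Rle_trans; [apply (psum_le _ (fun k => al / 2 * dd kd + / al * (Pq k + dd k)))|].
    { intros k _. pose proof (FI k). unfold a. unfold Rdiv in *. lra. }
    rewrite psum_plus, psum_const, psum_scal, psum_shift. lra. }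
  assert (Hmono : forall j, (S m <= j <= kd)%nat -> Et kd <= Et j).
  { intros j Hj. rewrite Hn. apply mono; [|lia]. intros k Hk. pose proof (FD2 k ltac:(lia)).
    pose proof (HPqp k). pose proof (Hddp k). nra. }
  assert (P8 : INR (S (S L')) * Et kd <= 2 * (E (S m) + psum E (S (S m)) L' + E kd)).
  { replace (INR (S (S L')) * Et kd) with (psum (fun _ => Et kd) (S m) (S (S L'))) by (rewrite psum_const; ring).
    eapply Rle_trans; [apply (psum_le _ (fun k => 2 * E k))|].
    { intros k Hk. pose proof (Hmono k ltac:(lia)). pose proof (FE k). lra. }
    rewrite psum_scal, psum_shift. simpl psum. replace (S (S (m + L')))%nat with kd by lia. lra. }
  assert (P9 : al * psum E (S (S m)) L' + psum gn (S (S m)) L' <= 0).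
  { rewrite <- psum_scal, <- psum_plus. replace 0 with (psum (fun _ => 0) (S (S m)) L')
      by (rewrite psum_const; ring).
    apply psum_le. intros k _. unfold E, gn.
    pose proof (HGp k). pose proof (Hddp k).
    assert (al * G k <= th / 2 * G k) by (apply Rmult_le_compat_r; lra).
    assert (al * rho2 * dd k <= c0 / 2 * dd k) by (apply Rmult_le_compat_r; lra).
    assert (0 <= th / 2 * G k) by nra. nra. }
  assert (HEtp : forall k, 0 <= Et k).
  { intros k. unfold Et. pose proof (hinner_pos _ (r k)). pose proof (hinner_pos _ (p k)). nra. }
  assert (HEtm1 : Et (S m) <= 3 * E m).
  { pose proof (FD1 m Hm). pose proof (FE m). pose proof (hinner_pos _ (r m)).
    assert (0 <= rho1 * hinner (r m) (r m)) by nra. unfold E, G in *. lra. }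
  assert (HEtkd : Et kd <= Et (S m)) by lra.
  assert (HgE3 : psum gE (S m) (S L') <= 3 * E m) by (pose proof (HEtp kd); lra).
  split.
  -
    set (Cc := C1 + rho2 + 3).
    assert (Q2 : - a kd <= Rabs (a m) + Rabs (a kd - a m)).
    { pose proof (Rle_abs (- a m)). pose proof (Rle_abs (- (a kd - a m))). rewrite Rabs_Ropp in *. lra. }
    assert (Q2' : rho2 * (- a kd) <= rho2 * (Rabs (a m) + Rabs (a kd - a m))) by (apply Rmult_le_compat_l; lra).
    assert (Q3 : rho2 * (2 * Rabs (a m)) <= rho2 * (dd kd + hinner (w m) (w m))) by (apply Rmult_le_compat_l; [lra| exact FI0]).
    assert (Q4 : rho2 * Rabs (a kd - a m) <= rho2 * (INR (S (S L')) * (al / 2 * dd kd)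
     + / al * (Pq m + dd m + psum (fun k => Pq k + dd k) (S m) (S L')))) by (apply Rmult_le_compat_l; lra).
    assert (Q5 : rho2 * dd kd <= Et kd).
    { destruct (FF kd ltac:(lia)) as [F1 _]. pose proof (HGp kd). unfold E in F1. lra. }
    pose proof (pos_INR (S (S L'))) as HINR.
    assert (Q6 : INR (S (S L')) * (rho2 * dd kd) <= INR (S (S L')) * Et kd) by (apply Rmult_le_compat_l; lra).
    assert (Q7 : al / 2 * (INR (S (S L')) * Et kd) <= al / 2 * (2 * (E (S m) + psum E (S (S m)) L' + E kd)))
      by (apply Rmult_le_compat_l; lra).
    assert (Q8 : rho2 * Pq m <= 2 * Et (S m) + 2 * Et m).
    { pose proof (sq_sub (p (S m)) (p m)) as S1. fold (Pq m) in S1.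
      assert (rho2 * Pq m <= rho2 * (2 * hinner (p (S m)) (p (S m)) + 2 * hinner (p m) (p m))) by (apply Rmult_le_compat_l; lra).
      pose proof (hinner_pos _ (r m)). pose proof (hinner_pos _ (r (S m))).
      assert (0 <= rho1 * hinner (r m) (r m)) by nra. assert (0 <= rho1 * hinner (r (S m)) (r (S m))) by nra.
      unfold Et. lra. }
    assert (Q9 : rho2 * dd m <= E m) by (pose proof (HGp m); unfold E; lra).
    assert (Hial : 0 < / al) by (apply Rinv_0_lt_compat; lra).
    assert (Q10 : / al * (rho2 * Pq m) <= / al * (10 * E m)).
    { apply Rmult_le_compat_l; [lra|]. pose proof (FE m). lra. }
    assert (Q11 : / al * (rho2 * dd m) <= / al * E m) by (apply Rmult_le_compat_l; lra).
    assert (Q12 : rho2 * psum (fun k => Pq k + dd k) (S m) (S L') <= rho2 * (K2 * (3 * E m))).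
    { apply Rmult_le_compat_l; [lra|]. eapply Rle_trans; [exact P6|]. apply Rmult_le_compat_l; lra. }
    assert (Q13 : / al * (rho2 * psum (fun k => Pq k + dd k) (S m) (S L')) <= / al * (rho2 * (K2 * (3 * E m))))
      by (apply Rmult_le_compat_l; lra).
    assert (Q14 : psum h (S m) (S L') <= K1 * (3 * E m)).
    { eapply Rle_trans; [exact P5|]. apply Rmult_le_compat_l; lra. }
    assert (Q15 : psum (fun k => gn (S k) + h k) (S m) L' = psum gn (S (S m)) L' + psum h (S m) L').
    { rewrite psum_plus, psum_comp. reflexivity. }
    assert (Q16 : psum h (S m) (S L') = psum h (S m) L' + h (S m + L')%nat) by reflexivity.
    assert (Q17 : al * E (S m) <= - gn (S m)).
    { unfold E, gn. pose proof (HGp (S m)). pose proof (Hddp (S m)).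
      assert (al * G (S m) <= th / 2 * G (S m)) by (apply Rmult_le_compat_r; lra).
      assert (al * rho2 * dd (S m) <= c0 / 2 * dd (S m)) by (apply Rmult_le_compat_r; lra).
      assert (0 <= th / 2 * G (S m)) by nra. nra. }
    assert (Q18 : 2 * al * E kd <= - gn kd).
    { unfold E, gn. pose proof (HGp kd). pose proof (Hddp kd).
      assert (al * G kd <= th / 2 * G kd) by (apply Rmult_le_compat_r; lra).
      assert (al * rho2 * dd kd <= c0 / 2 * dd kd) by (apply Rmult_le_compat_r; lra).
      nra. }
    assert (HC : C1 * E m = 3 * K1 * E m + 3/2 * E m + 11 * / al * E m + 3 * rho2 * K2 * / al * E m)
      by (unfold C1; field; lra).
    assert (Q19 : C1 * E m <= Cc * E m) by (apply Rmult_le_compat_r; [apply HEp| unfold Cc; lra]).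
    assert (Q20 : rho2 / 2 * hinner (w m) (w m) <= Cc * hinner (w m) (w m))
      by (apply Rmult_le_compat_r; [apply hinner_pos| unfold Cc; lra]).
    assert (Q21 : rho2 * hinner (d m) (w (S m)) <= Cc * Rabs (hinner (d m) (w (S m)))).
    { pose proof (Rle_abs (hinner (d m) (w (S m)))).
      assert (rho2 * Rabs (hinner (d m) (w (S m))) <= Cc * Rabs (hinner (d m) (w (S m))))
        by (apply Rmult_le_compat_r; [apply Rabs_pos| unfold Cc; lra]).
      assert (rho2 * hinner (d m) (w (S m)) <= rho2 * Rabs (hinner (d m) (w (S m)))) by (apply Rmult_le_compat_l; lra).
      lra. }
    assert (Q22 : 0 <= Cc * (hnorm (hsub (W (x m)) (y m))) ^ 2)
      by (apply Rmult_le_pos; [unfold Cc; lra| apply pow2_ge_0]).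
    assert (Q23 : T kd = Dl kd + rho2 * a kd) by reflexivity.
    assert (Q24 : E kd <= Et kd) by (apply (FF kd ltac:(lia))).
    assert (Q6' : al / 2 * (INR (S (S L')) * (rho2 * dd kd)) <= al / 2 * (INR (S (S L')) * Et kd))
      by (apply Rmult_le_compat_l; lra).
    change (bregman f (mu kd) yh (y kd)) with (Dl kd). change (bregman f (mu m) yh (y m)) with (Dl m).
    clearbody T a gn h Dl.
    clear - P1 P2 P3 P9 Q2' Q3 Q4 Q5 Q6' Q7 HEtkd HEtm1 Q10 Q11 Q13 Q14 Q15 Q16 Q17 Q18 HC Q19 Q20 Q21 Q22 Q23.
    unfold Rdiv in *. lra.
  - set (Cc := C1 + rho2 + 3).
    pose (Qf := fun k => hinner (mu k) vv + rho2 * hinner (d k) (w kd)).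
    assert (R1 : Rabs (Qf kd - Qf m) <= psum (fun k => Rabs (Qf (S k) - Qf k)) m (S (S L'))).
    { replace kd with (m + S (S L'))%nat at 1 by lia. apply tel_abs. }
    assert (R2 : psum (fun k => Rabs (Qf (S k) - Qf k)) m (S L') <= psum (fun k => 5/2 * E (S k)) m (S L')).
    { apply psum_le. intros k Hk. unfold Qf. rewrite (FQ k ltac:(lia)).
      eapply Rle_trans; [apply FQb|].
      pose proof (FH1 (S k) ltac:(lia) ltac:(lia)). pose proof (Hth_eq (S k)).
      pose proof (HGp (S k)). assert (0 <= th * G (S k)) by nra.
      destruct (FF kd ltac:(lia)) as [F1 _]. pose proof (Hmono (S k) ltac:(lia)).
      pose proof (FE (S k)). pose proof (Hddp kd). pose proof (Hddp (S k)).
      assert (0 <= rho2 * dd kd) by nra. assert (0 <= rho2 * dd (S k)) by nra.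
      unfold E in *. lra. }
    assert (R3 : Rabs (Qf (S (m + S L')) - Qf (m + S L')%nat) <= 2 * E kd + M * tau * delta ^ 2).
    { unfold Qf. rewrite (FQ (m + S L')%nat ltac:(lia)).
      eapply Rle_trans; [apply FQb|]. replace (S (m + S L')) with kd by lia.
      pose proof (FH2 kd). pose proof (Hth_eq kd).
      pose proof (HGp kd). assert (0 <= th * G kd) by nra.
      pose proof (Hddp kd). assert (0 <= rho2 * dd kd) by nra. unfold E. lra. }
    assert (R4 : psum (fun k => 5/2 * E (S k)) m (S L') = 5/2 * psum E (S m) (S L')).
    { rewrite psum_scal, (psum_comp E). reflexivity. }
    assert (R5 : hinner (mu kd) vv = hinner (mu m) vv + (Qf kd - Qf m) + (- (rho2 * hinner (d kd) (w kd)))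
        + rho2 * hinner (d m) (w kd)) by (unfold Qf; ring).
    rewrite R5. eapply Rle_trans; [apply abs4|].
    rewrite Rabs_Ropp, !Rabs_mult, (Rabs_right rho2) by lra.
    pose proof (FU kd). pose proof (FU m).
    rewrite (sumf_psum (Ek A W rho1 rho2 bd x y)).
    rewrite (psum_ext _ E _ _ TE).
    replace (kd - m)%nat with (S (S L')) by lia.
    rewrite psum_shift.
    assert (R6 : psum E (S m) (S (S L')) = psum E (S m) (S L') + E kd).
    { change (psum E (S m) (S (S L'))) with (psum E (S m) (S L') + E (S m + S L')%nat). replace (S m + S L')%nat with kd by lia. reflexivity. }
    rewrite R6.
    assert (R7 : psum (fun k => Rabs (Qf (S k) - Qf k)) m (S (S L'))
       = psum (fun k => Rabs (Qf (S k) - Qf k)) m (S L') + Rabs (Qf (S (m + S L')) - Qf (m + S L')%nat))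
      by reflexivity.
    assert (HpE : 0 <= psum E (S m) (S L')) by (apply psum_nonneg; intros; apply HEp).
    pose proof (HEp m). pose proof (HEp kd).
    assert (R8 : 3 * (E m + (psum E (S m) (S L') + E kd)) <= Cc * (E m + (psum E (S m) (S L') + E kd)))
      by (apply Rmult_le_compat_r; [lra| unfold Cc; lra]).
    assert (R9 : rho2 * hinner (w kd) (w kd) <= Cc * hinner (w kd) (w kd))
      by (apply Rmult_le_compat_r; [apply hinner_pos| unfold Cc; lra]).
    clearbody Qf. lra.
Qed.
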